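(* Let $A_1,A_2\in\mathbb{R}_{\max}^{n\times n}$ with $A_2<CSR[A_1]$, and let $A=A_1\oplus A_2$. Then $\lambda(A)=\lambda(A_1)$, $\mathrm{crit}(A)=\mathrm{crit}(A_1)$, $CS^tR[A]=CS^tR[A_1]$ for all $t\ge1$, and $T_1(A)=T_1(A_1)$.
   Context: Max-plus semiring $\mathbb{R}_{\max}=\mathbb{R}\cup\{-\infty\}$ with $a\oplus b=\max(a,b)$, $a\otimes b=a+b$; $(A\oplus B)_{ij}=\max(a_{ij},b_{ij})$, $(AB)_{ij}=\max_k(a_{ik}+b_{kj})$; $A^t$ is the $t$-th max-plus power, $A^0=I$. $\mathcal{D}(A)$ is the digraph on $\{1,\dots,n\}$ with arc $(i,j)$ of weight $a_{ij}$ whenever $a_{ij}\ne-\infty$; walks, length (number of arcs), weight (sum of arc weights), cycles as usual. $\lambda(A)$ is the maximal cycle mean ($-\infty$ if no cycle). $\mathrm{crit}(A)$ is the subgraph of all nodes and arcs of cycles attaining $\lambda(A)$; its nodes are critical. The cyclicity of $\mathrm{crit}(A)$ is the lcm over its strongly connected components of the gcd of their cycle lengths. CSR terms: if $\lambda=\lambda(A)\ne-\infty$, with $\gamma$ the cyclicity of $\mathrm{crit}(A)$, $A_\lambda$ equal to $A$ with $\lambda$ subtracted from every finite entry, $M=I\oplus N\oplus\dots\oplus N^{n-1}$ where $N=A_\lambda^\gamma$: $c_{ij}=m_{ij}$ if $j$ critical, else $-\infty$; $r_{ij}=m_{ij}$ if $i$ critical, else $-\infty$; $s_{ij}=a_{ij}$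 if $(i,j)$ is an arc of $\mathrm{crit}(A)$, else $-\infty$; $CS^tR[A]$ is the product $CS^tR$ and $CSR[A]=CS^1R[A]$. If $\lambda(A)=-\infty$, $CS^tR[A]$ is the all-$(-\infty)$ matrix. $B_N$ has $(B_N)_{ij}=-\infty$ if $i$ or $j$ is critical and $a_{ij}$ otherwise. $T_1(A)$ is the least $T\ge0$ with $A^t=CS^tR[A]\oplus B_N^t$ for all $t\ge T$. Strict order: for matrices $X,Y$, $X<Y$ means $x_{ij}\le y_{ij}$ for all $i,j$, with $x_{ij}=y_{ij}$ only if both equal $-\infty$. *)

(* Defs.v *)
(* Max-plus matrices over R_max = R ∪ {-oo}, modelled with
   option R (None = -oo), for an arbitrary real (ordered) field R. *)
From HB Require Import structures.
From mathcomp Require Import all_boot all_order all_algebra.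
Set Implicit Arguments. Unset Strict Implicit. Unset Printing Implicit Defensive.
Import Order.TTheory GRing.Theory Num.Theory.
Local Open Scope ring_scope.

Section MaxPlus.
Variable R : realFieldType.

Definition mpadd (a b : option R) : option R :=
  match a, b with
  | Some x, Some y => Some (Num.max x y)
  | Some x, None => Some x
  | None, _ => b
  end.
Definition mpmul (a b : option R) : option R :=
  match a, b with
  | Some x, Some y => Some (x + y)
  | _, _ => None
  end.
Definition mple (a b : option R) : bool :=
  match a, b with
  | None, _ => true
  | Some _, None => false
  | Some x, Some y => x <= y
  end.

Variable n : nat.
Definition mpmx := 'I_n -> 'I_n -> option R.

Definition mxadd (A B : mpmx) : mpmx := fun i j => mpadd (A i j) (B i j).
Definition mxmul (A B : mpmx) : mpmx :=
  fun i j => \big[mpadd/None]_(k < n) mpmul (A i k) (B k j).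
Definition mxI : mpmx := fun i j => if i == j then Some 0 else None.
Definition mxbot : mpmx := fun _ _ => None.
Definition mxpow (A : mpmx) (t : nat) : mpmx := iter t (mxmul A) mxI.

Definition mxlt (X Y : mpmx) : Prop :=
  forall i j, mple (X i j) (Y i j) /\ (X i j = Y i j -> X i j = None).

Definition arcA (A : mpmx) : rel 'I_n := fun i j => A i j != None.

(* A cycle of a digraph e is a nonempty sequence of pairwise distinct nodes
   [i_0; ...; i_{k-1}] with arcs (i_m, i_{m+1 mod k}); its length is k. *)
Definition arcs (c : seq 'I_n) : seq ('I_n * 'I_n) := zip c (rot 1 c).
Definition is_cycle (e : rel 'I_n) (c : seq 'I_n) : bool :=
  [&& 0 < size c, uniq c & all (fun p => e p.1 p.2) (arcs c)]%N.
Definition weight (A : mpmx) (c : seq 'I_n) : R :=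
  \sum_(p <- arcs c) odflt 0 (A p.1 p.2).
Definition cmean (A : mpmx) (c : seq 'I_n) : R := weight A c / (size c)%:R.

(* lambda(A): maximal cycle mean, None (= -oo) if there is no cycle.
   Every cycle has length k+1 <= n, so we range over tuples. *)
Definition mplambda (A : mpmx) : option R :=
  \big[mpadd/None]_(k < n)
     \big[mpadd/None]_(t : (k.+1).-tuple 'I_n | is_cycle (arcA A) t)
        Some (cmean A t).

Definition crit_cycle (A : mpmx) (c : seq 'I_n) : bool :=
  is_cycle (arcA A) c && (mplambda A == Some (cmean A c)).

Definition crit_node (A : mpmx) (i : 'I_n) : bool :=
  [exists k : 'I_n, exists t : (k.+1).-tuple 'I_n,
     crit_cycle A t && (i \in (t : seq 'I_n))].
Definition crit_arc (A : mpmx) : rel 'I_n := fun i j =>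
  [exists k : 'I_n, exists t : (k.+1).-tuple 'I_n,
     crit_cycle A t && ((i, j) \in arcs t)].

Definition scc (e : rel 'I_n) (i j : 'I_n) : bool :=
  connect e i j && connect e j i.
Definition scc_gcd (e : rel 'I_n) (i : 'I_n) : nat :=
  \big[gcdn/0%N]_(k < n)
     \big[gcdn/0%N]_(t : (k.+1).-tuple 'I_n | is_cycle e t && all (scc e i) t)
        k.+1.
(* cyclicity of crit(A): lcm over the s.c.c. of crit(A) (each s.c.c. is
   represented by its critical nodes) of the gcd of their cycle lengths *)
Definition crit_cyclicity (A : mpmx) : nat :=
  \big[lcmn/1%N]_(i | crit_node A i) scc_gcd (crit_arc A) i.

Definition mxsubl (A : mpmx) (l : R) : mpmx :=
  fun i j => omap (fun x => x - l) (A i j).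
Definition csrM (A : mpmx) (l : R) : mpmx :=
  let N := mxpow (mxsubl A l) (crit_cyclicity A) in
  fun i j => \big[mpadd/None]_(k < n) mxpow N k i j.
Definition csrC (A : mpmx) (l : R) : mpmx :=
  fun i j => if crit_node A j then csrM A l i j else None.
Definition csrR (A : mpmx) (l : R) : mpmx :=
  fun i j => if crit_node A i then csrM A l i j else None.
Definition csrS (A : mpmx) : mpmx :=
  fun i j => if crit_arc A i j then A i j else None.

Definition CStR (A : mpmx) (t : nat) : mpmx :=
  match mplambda A with
  | None => mxbot
  | Some l => mxmul (mxmul (csrC A l) (mxpow (csrS A) t)) (csrR A l)
  end.
Definition CSR (A : mpmx) : mpmx := CStR A 1.

Definition BN (A : mpmx) : mpmx :=
  fun i j => if crit_node A i || crit_node A j then None else A i j.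

Definition csr_from (A : mpmx) (T : nat) : Prop :=
  forall t, (T <= t)%N -> forall i j,
    mxpow A t i j = mpadd (CStR A t i j) (mxpow (BN A) t i j).
Definition is_T1 (A : mpmx) (T : nat) : Prop :=
  csr_from A T /\ forall T', csr_from A T' -> (T <= T')%N.

End MaxPlus.

(* Main.v *)
Require Import Defs.
From HB Require Import structures.
From mathcomp Require Import all_boot all_order all_algebra.
From Stdlib Require Import FunctionalExtensionality.
From mathcomp Require Import lra zify.
Set Implicit Arguments. Unset Strict Implicit. Unset Printing Implicit Defensive.
Import Order.TTheory GRing.Theory Num.Theory.
Local Open Scope ring_scope.

Section Gen.
Variable R : realFieldType.

Lemma mple_refl (a : option R) : mple a a.
Proof. by case: a => //= x; rewrite lexx. Qed.

Lemma mple_trans (a b c : option R) : mple a b -> mple b c -> mple a c.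
Proof. by case: a; case: b; case: c => //= x y z; apply: le_trans. Qed.

Lemma mple_anti (a b : option R) : mple a b -> mple b a -> a = b.
Proof. by case: a; case: b => //= x y h1 h2; congr Some; apply/eqP; rewrite eq_le h1 h2. Qed.

Lemma mple_None (a : option R) : mple a None -> a = None.
Proof. by case: a. Qed.

Lemma mpadd_l (a b : option R) : mple a (mpadd a b).
Proof. by case: a; case: b => //= x y; rewrite le_max lexx. Qed.

Lemma mpadd_r (a b : option R) : mple b (mpadd a b).
Proof. by case: a; case: b => //= x y; rewrite ?le_max lexx ?orbT. Qed.

Lemma mpadd_le (a b c : option R) : mple a c -> mple b c -> mple (mpadd a b) c.
Proof. by case: a; case: b; case: c => //= x y z h1 h2; rewrite ge_max h1 h2. Qed.

Lemma mpadd_Some (a b : option R) y :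
  mple (Some y) (mpadd a b) -> mple (Some y) a \/ mple (Some y) b.
Proof.
case: a => [x|]; case: b => [z|] //=; try by [left|right].
by rewrite le_max => /orP[]; [left|right].
Qed.

Lemma mpmul_mono (a a' b b' : option R) :
  mple a a' -> mple b b' -> mple (mpmul a b) (mpmul a' b').
Proof. by case: a; case: a'; case: b; case: b' => //= x y z w h1 h2; apply: lerD. Qed.

Lemma mpmul_Some (a b : option R) v :
  mpmul a b = Some v -> exists x y, [/\ a = Some x, b = Some y & v = x + y].
Proof. by case: a; case: b => //= x y [<-]; exists y, x. Qed.

Lemma mpmulA (a b c : option R) : mpmul a (mpmul b c) = mpmul (mpmul a b) c.
Proof. by case: a; case: b; case: c => //= x y z; rewrite addrA. Qed.

Lemma mpmul1l (a : option R) : mpmul (Some 0) a = a.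
Proof. by case: a => //= x; rewrite add0r. Qed.

Lemma mpmul1r (a : option R) : mpmul a (Some 0) = a.
Proof. by case: a => //= x; rewrite addr0. Qed.


Lemma mpadd_mono (u u' w w' : option R) : mple u u' -> mple w w' -> mple (mpadd u w) (mpadd u' w').
Proof.
move=> h1 h2; apply: mpadd_le.
  exact: mple_trans h1 (mpadd_l _ _).
exact: mple_trans h2 (mpadd_r _ _).
Qed.

Lemma mpE (a a1 b b1 c : option R) : mple a1 a -> mple b1 b -> mple b1 a1 -> mple b a ->
  (forall x, a = Some x -> mple (Some x) a1 \/ exists2 v, c = Some v & x < v) ->
  (forall x, b = Some x -> mple (Some x) b1 \/ exists2 v, c = Some v & x < v) ->
  (a = mpadd c b <-> a1 = mpadd c b1).
Proof.
move=> h1 h2 h3 h4 Ha Hb; split => e.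
- apply: mple_anti.
    case E1: a1 => [y|] //.
    have hy : mple (Some y) (mpadd c b) by rewrite -E1 -e.
    case/mpadd_Some: hy => [hc|hb].
      exact: (mple_trans hc (mpadd_l _ _)).
    case Eb: b hb => [z|] // yz.
    case: (Hb z Eb) => [hz|[v ev zv]].
      exact: (mple_trans (mple_trans yz hz) (mpadd_r _ _)).
    rewrite ev; apply: (mple_trans _ (mpadd_l _ _)).
    by rewrite /= (le_trans yz (ltW zv)).
  apply: mpadd_le => //.
  case Ec: c => [v|] //.
  have : mple (Some v) a by rewrite e Ec; exact: mpadd_l.
  case Ea: a => [x|] // vx.
  case: (Ha x Ea) => [hx|[v' ev' xv']]; first exact: (mple_trans vx hx).
  by move: ev' xv' vx; rewrite Ec => -[<-] /= xv vx; move: (lt_le_trans xv vx); rewrite ltxx.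
- apply: mple_anti.
    case Ea: a => [x|] //.
    case: (Ha x Ea) => [hx|[v ev xv]].
      apply: (mple_trans hx); rewrite e; apply: mpadd_mono => //; exact: mple_refl.
    rewrite ev; apply: (mple_trans _ (mpadd_l _ _)).
    by rewrite /= ltW.
  apply: mpadd_le => //.
  apply: (mple_trans _ h1); rewrite e; exact: mpadd_l.
Qed.

Section Big.
Variables (I : eqType) (r : seq I) (P : pred I) (F : I -> option R).

Lemma big_ge i : i \in r -> P i -> mple (F i) (\big[@mpadd R/None]_(j <- r | P j) F j).
Proof.
elim: r => [|a r' IH] //=; rewrite in_cons big_cons => /orP[/eqP->|ir] Pi.
  by rewrite Pi; apply: mpadd_l.
case: (P a); last exact: IH.
exact: mple_trans (IH ir Pi) (mpadd_r _ _).
Qed.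

Lemma big_le y : (forall i, i \in r -> P i -> mple (F i) y) ->
  mple (\big[@mpadd R/None]_(j <- r | P j) F j) y.
Proof.
elim: r => [|a r' IH] h; first by rewrite big_nil.
rewrite big_cons; have IH' : mple (\big[@mpadd R/None]_(j <- r' | P j) F j) y.
  by apply: IH => i ir; apply: h; rewrite in_cons ir orbT.
case Pa: (P a) => //; apply: mpadd_le => //; apply: h => //; exact: mem_head.
Qed.

Lemma big_ex v : \big[@mpadd R/None]_(j <- r | P j) F j = Some v ->
  exists i, [/\ i \in r, P i & F i = Some v].
Proof.
elim: r v => [|a r' IH] v; first by rewrite big_nil.
rewrite big_cons; case Pa: (P a); last first.
  by move=> /IH [i [ir Pi Fi]]; exists i; rewrite in_cons ir orbT.
case Fa: (F a) => [x|]; case B: (\big[@mpadd R/None]_(j <- r' | P j) F j) => [y|] //=.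
- move=> [<-]; rewrite /Num.max; case: ifP => _.
    by have [i [ir Pi Fi]] := IH _ B; exists i; rewrite in_cons ir orbT.
  by exists a; rewrite mem_head.
- by move=> [<-]; exists a; rewrite mem_head.
- by move=> [<-]; have [i [ir Pi Fi]] := IH _ B; exists i; rewrite in_cons ir orbT.
Qed.
End Big.
End Gen.
Section Walk.
Variables (R : realFieldType) (n : nat).
Implicit Types (M : mpmx R n) (s : seq 'I_n).

Fixpoint wt M x s : option R :=
  match s with [::] => Some 0 | y :: s' => mpmul (M x y) (wt M y s') end.

Lemma mxpowS M t : mxpow M t.+1 = mxmul M (mxpow M t).
Proof. by []. Qed.

Lemma mxmul_ge M1 M2 i k j : mple (mpmul (M1 i k) (M2 k j)) (mxmul M1 M2 i j).
Proof. by exact: (big_ge (fun k => mpmul (M1 i k) (M2 k j)) (mem_index_enum _)).  Qed.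

Lemma mxmul_ex M1 M2 i j v : mxmul M1 M2 i j = Some v ->
  exists k x y, [/\ M1 i k = Some x, M2 k j = Some y & v = x + y].
Proof.
rewrite /mxmul => /big_ex [k [_ _ /mpmul_Some [x [y [h1 h2 h3]]]]].
by exists k, x, y.
Qed.

Lemma wt_cat M x s1 s2 : wt M x (s1 ++ s2) = mpmul (wt M x s1) (wt M (last x s1) s2).
Proof. elim: s1 x => [|y s1 IH] x /=; first by case: (wt M x s2) => //= a; rewrite add0r. by rewrite IH mpmulA. Qed.

Lemma wt_mono M1 M2 x s : (forall i j, mple (M1 i j) (M2 i j)) -> mple (wt M1 x s) (wt M2 x s).
Proof. move=> h; elim: s x => [|y s IH] x /=; first by rewrite lexx. exact: mpmul_mono. Qed.

Lemma wt_eq M1 M2 x s : (forall p, p \in zip (x :: s) s -> M1 p.1 p.2 = M2 p.1 p.2) ->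
  wt M1 x s = wt M2 x s.
Proof.
elim: s x => [|y s IH] x //= h; rewrite (h (x, y)) ?mem_head // IH // => p ps.
by apply: h; rewrite in_cons ps orbT.
Qed.

Lemma wt_sub M1 M2 x s w : (forall i j, M1 i j = None \/ M1 i j = M2 i j) ->
  wt M1 x s = Some w -> wt M2 x s = Some w.
Proof.
move=> h; elim: s x w => [|y s IH] x w //= /mpmul_Some [a [b [h1 h2 ->]]].
rewrite (IH _ _ h2); case: (h x y) => e; first by rewrite e in h1.
by rewrite -e h1.
Qed.

Lemma wt_zip M x s : wt M x s =
  if all (fun p => M p.1 p.2 != None) (zip (x :: s) s)
  then Some (\sum_(p <- zip (x :: s) s) odflt 0 (M p.1 p.2)) else None.
Proof.
elim: s x => [|y s IH] x /=; first by rewrite big_nil.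
rewrite IH big_cons; case: (M x y) => [a|] //=.
by case: (all _ _).
Qed.

Lemma wt_norm M l x s : wt (mxsubl M l) x s = omap (fun w => w - (size s)%:R * l) (wt M x s).
Proof.
elim: s x => [|y s IH] x /=; first by rewrite mul0r subr0.
rewrite IH /mxsubl; case: (M x y) => [a|] //=; case: (wt M y s) => [b|] //=.
by congr Some; rewrite -addn1 natrD; lra.
Qed.

Lemma pow_low M t x s : size s = t -> mple (wt M x s) (mxpow M t x (last x s)).
Proof.
elim: s x t => [|y s IH] x t /= <-; first by rewrite /mxpow /= /mxI eqxx /= lexx.
rewrite mxpowS; apply: mple_trans (mxmul_ge _ _ _ y _).
by apply: mpmul_mono; [apply: mple_refl | apply: IH].
Qed.

Lemma pow_up M t x j v : mxpow M t x j = Some v ->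
  exists s, [/\ size s = t, last x s = j & wt M x s = Some v].
Proof.
elim: t x v => [|t IH] x v.
  rewrite /mxpow /= /mxI; case: eqP => // <- [<-]; by exists [::].
rewrite mxpowS => /mxmul_ex [k [a [b [h1 /IH [s [h2 h3 h4] ->]]]]].
by exists (k :: s); rewrite /= h1 h4 h2 h3.
Qed.

Lemma pow_mono M1 M2 t i j : (forall i j, mple (M1 i j) (M2 i j)) ->
  mple (mxpow M1 t i j) (mxpow M2 t i j).
Proof.
move=> h; case E: (mxpow M1 t i j) => [v|] //.
have [s [hs hl hw]] := pow_up E; rewrite -hw -hl.
exact: mple_trans (wt_mono _ _ h) (pow_low _ _ hs).
Qed.

Lemma ppow_low M g q x s : size s = (g * q)%N ->
  mple (wt M x s) (mxpow (mxpow M g) q x (last x s)).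
Proof.
elim: q x s => [|q IH] x s hs.
  by move: hs; rewrite muln0 => /size0nil ->; rewrite /mxpow /= /mxI eqxx /= lexx.
rewrite -(cat_take_drop g s) wt_cat last_cat mxpowS.
apply: mple_trans (mxmul_ge _ _ _ (last x (take g s)) _).
apply: mpmul_mono; first by apply: pow_low; rewrite size_takel // hs mulnS leq_addr.
by apply: IH; rewrite size_drop hs mulnS addKn.
Qed.

Lemma ppow_up M g q x j v : mxpow (mxpow M g) q x j = Some v ->
  exists s, [/\ size s = (g * q)%N, last x s = j & wt M x s = Some v].
Proof.
elim: q x v => [|q IH] x v.
  rewrite /mxpow /= /mxI; case: eqP => // <- [<-]; by exists [::]; rewrite muln0.
rewrite mxpowS => /mxmul_ex [k [a [b [/pow_up [s1 [e1 l1 w1]] /IH [s [h2 h3 h4] ->]]]]].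
exists (s1 ++ s); rewrite size_cat e1 h2 mulnS last_cat l1 h3 wt_cat w1 l1 h4; split=> //.
Qed.

End Walk.
Section Seqs.
Variables (T : eqType).

Lemma zip_rcons_trunc (s t : seq T) a : size s = size t -> zip (rcons s a) t = zip s t.
Proof. by elim: s t => [|x s IH] [|y t] //= [/IH ->]. Qed.

Lemma zip_take_ (a b : seq T) m : zip (take m a) (take m b) = take m (zip a b).
Proof. by elim: a b m => [|x a IH] [|y b] [|m] //=; rewrite IH. Qed.

Lemma zip_drop_ (a b : seq T) m : zip (drop m a) (drop m b) = drop m (zip a b).
Proof. elim: a b m => [|x a IH] [|y b] [|m] //=; rewrite ?IH //; by case: (drop _ _). Qed.

Lemma zip_rot (a b : seq T) m : size a = size b -> zip (rot m a) (rot m b) = rot m (zip a b).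
Proof.
move=> e; by rewrite /rot zip_cat ?size_drop ?e // zip_take_ zip_drop_.
Qed.
End Seqs.

Section Arcs.
Variable n : nat.
Implicit Types (s c : seq 'I_n).

Lemma arcs_rot c m : perm_eq (arcs (rot m c)) (arcs c).
Proof.
by rewrite /arcs rot_rot zip_rot ?size_rot // perm_rot.
Qed.

Lemma arcs_cons x s : arcs (x :: s) = zip (x :: rcons s x) (rcons s x).
Proof.
rewrite /arcs rot1_cons -rcons_cons zip_rcons_trunc //=.
by rewrite size_rcons.
Qed.

Lemma closed_arcs x s : last x s = x -> s != [::] -> perm_eq (zip (x :: s) s) (arcs s).
Proof.
case/lastP: s => [|s y] //; rewrite last_rcons => -> _.
rewrite -arcs_cons -rot1_cons perm_sym; exact: arcs_rot.
Qed.

Lemma rot_closed c x : x \in c ->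
  exists z, [/\ perm_eq z c, last x z = x, size z = size c & perm_eq (zip (x :: z) z) (arcs c)].
Proof.
move=> xc; have := rot_index xc; set c'' := (drop _ c ++ _) => e.
exists (rcons c'' x); split.
- by rewrite -rot1_cons -e !perm_rot.
- by rewrite last_rcons.
- by rewrite -rot1_cons -e !size_rot.
- by rewrite -arcs_cons -e arcs_rot.
Qed.

Lemma last_take (x : 'I_n) s a : (a < size s)%N -> last x (take a.+1 s) = nth x s a.
Proof.
elim: s x a => [|y s IH] x [|a] //= h.
  by rewrite take0.
by rewrite IH // (set_nth_default x).
Qed.

End Arcs.
Section Loop.
Variables (R : realFieldType) (n : nat).
Implicit Types (M : mpmx R n) (s : seq 'I_n).

Lemma loop_split M x s a b : (a <= b <= size s)%N -> last x (take a s) = last x (take b s) ->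
  let y := last x (take a s) in
  let s1 := take a s in let s2 := drop a (take b s) in let s3 := drop b s in
  [/\ s = s1 ++ s2 ++ s3,
      wt M x s = mpmul (wt M x s1) (mpmul (wt M y s2) (wt M y s3)),
      last y s2 = y,
      wt M x (s1 ++ s3) = mpmul (wt M x s1) (wt M y s3)
    & last x (s1 ++ s3) = last x s].
Proof.
case/andP=> ab bs e y s1 s2 s3.
have e1 : take b s = s1 ++ s2 by rewrite /s1 -(take_takel s ab) cat_take_drop.
have eS : s = s1 ++ s2 ++ s3 by rewrite catA -e1 cat_take_drop.
have l2 : last y s2 = y by rewrite {2}/y e e1 last_cat.
split=> //.
- by rewrite {1}eS !wt_cat -/s1 (_ : last x s1 = y) // l2.
- by rewrite wt_cat.
- by rewrite [in RHS]eS !last_cat (_ : last x s1 = y) // l2.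
Qed.

Variables (X : mpmx R n) (l : R).
Hypothesis hl : mplambda X = Some l.

Lemma size_uniq_le s : uniq s -> (size s <= n)%N.
Proof. by move=> u; rewrite -(card_uniqP u) -[X in (_ <= X)%N]card_ord max_card. Qed.

Lemma cyc_le c : is_cycle (arcA X) c -> weight X c <= (size c)%:R * l.
Proof.
move=> cy; have /and3P [sz u _] := cy.
have szn := size_uniq_le u.
have kn : ((size c).-1 < n)%N by rewrite prednK.
pose k : 'I_n := Ordinal kn.
have ct : size c == k.+1 by rewrite /= prednK.
pose t : (k.+1).-tuple 'I_n := Tuple ct.
have h1 : mple (Some (cmean X t)) (mplambda X).
  apply: mple_trans (big_ge (fun k : 'I_n => \big[@mpadd R/None]_(t : (k.+1).-tuple 'I_n | is_cycle (arcA X) t) Some (cmean X t)) (mem_index_enum k) isT).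
  exact: (big_ge (fun t : (k.+1).-tuple 'I_n => Some (cmean X t)) (mem_index_enum t) cy).
move: h1; rewrite hl /= /cmean /= ler_pdivrMr ?ltr0n // mulrC; apply.
Qed.

Lemma closed_le s x w : last x s = x -> wt X x s = Some w -> w <= (size s)%:R * l.
Proof.
have [m] := ubnP (size s); elim: m s x w => [|m IH] s x w // hs hlst hw.
case: (boolP (uniq s)) => u.
  case: s hs hlst hw u => [|y s'] hs hlst hw u; first by move: hw => [<-]; rewrite mul0r.
  set s := y :: s' in hlst hw u *.
  have P := closed_arcs hlst isT.
  move: hw; rewrite wt_zip (perm_all _ P) (perm_big _ P).
  case: ifP => // ha [<-].
  apply: cyc_le; by apply/and3P; split.
have [a [b [ab bs e]]] := uniqPn x u.
have ab' : (a.+1 <= b.+1 <= size s)%N by rewrite ltnS ltnW.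
have e' : last x (take a.+1 s) = last x (take b.+1 s).
  by rewrite !last_take // (ltn_trans ab).
have [eS w1 l2 w2 l3] := loop_split X ab' e'.
set y := last x (take a.+1 s) in w1 l2 w2.
move: hw; rewrite w1 => /mpmul_Some [u1 [v [h1 /mpmul_Some [u2 [u3 [h2 h3 ->]]] ->]]].
have sz : size s = (size (take a.+1 s) + size (drop a.+1 (take b.+1 s)) + size (drop b.+1 s))%N.
  by rewrite {1}eS !size_cat addnA.
have s2pos : (0 < size (drop a.+1 (take b.+1 s)))%N.
  by rewrite size_drop size_takel ?subn_gt0 // ltnW.
have s1sz : size (take a.+1 s) = a.+1 by rewrite size_takel // (ltn_trans ab bs).
have le2 : u2 <= (size (drop a.+1 (take b.+1 s)))%:R * l.
  apply: (IH _ y u2 _ l2 h2); move: hs s2pos s1sz; rewrite sz; lia.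
have le13 : u1 + u3 <= (size (take a.+1 s ++ drop b.+1 s))%:R * l.
  apply: (IH _ x (u1 + u3) _ (etrans l3 hlst)); last by rewrite w2 h1 h3.
  move: hs s2pos s1sz; rewrite sz size_cat; lia.
move: le2 le13; rewrite size_cat sz !natrD; lra.
Qed.

Lemma wt_normS M l' x s u : wt (mxsubl M l') x s = Some u -> wt M x s = Some (u + (size s)%:R * l').
Proof. rewrite wt_norm; case: (wt M x s) => //= w [<-]; congr Some; lra. Qed.

Lemma wt_normS' M l' x s w : wt M x s = Some w -> wt (mxsubl M l') x s = Some (w - (size s)%:R * l').
Proof. by rewrite wt_norm => ->. Qed.

Lemma closed_leB s x u : last x s = x -> wt (mxsubl X l) x s = Some u -> u <= 0.
Proof. move=> h /wt_normS /(closed_le h); lra. Qed.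

Lemma short_walk g q i s v : size s = (g * q)%N -> wt (mxsubl X l) i s = Some v ->
  exists q' s', [/\ (q' < n)%N, size s' = (g * q')%N, last i s' = last i s
     & mple (Some v) (wt (mxsubl X l) i s')].
Proof.
have [m] := ubnP q; elim: m q s v => [|m IH] q s v // hq hs hw.
case: (ltnP q n) => qn; first by exists q, s; split=> //; rewrite hw /= lexx.
pose L := [seq last i (take (g * k) s) | k <- iota 0 q.+1].
have nu : ~~ uniq L.
  apply/negP => /size_uniq_le; rewrite size_map size_iota; lia.
have [a [b [ab bq e]]] := uniqPn i nu.
rewrite size_map size_iota in bq.
rewrite !(nth_map 0%N) ?size_iota ?(ltn_trans ab) // !nth_iota ?(ltn_trans ab) // !add0n in e.
have ab' : (g * a <= g * b <= size s)%N by rewrite hs !leq_mul2l ltnW // -ltnS bq !orbT.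
have [eS w1 l2 w2 l3] := loop_split (mxsubl X l) ab' e.
move: hw; rewrite w1 => /mpmul_Some [u1 [v' [h1 /mpmul_Some [u2 [u3 [h2 h3 ->]]] ->]]].
have le2 := closed_leB l2 h2.
have c1 : (q - (b - a) < m)%N by move: hq ab bq; lia.
have c2 : size (take (g * a) s ++ drop (g * b) s) = (g * (q - (b - a)))%N.
  rewrite size_cat size_takel ?size_drop ?hs; last first.
    by rewrite -hs (leq_trans _ (proj2 (andP ab'))) // leq_mul2l ltnW ?orbT.
  rewrite -mulnBr -mulnDr; congr (g * _)%N; move: ab bq; lia.
have c3 : wt (mxsubl X l) i (take (g * a) s ++ drop (g * b) s) = Some (u1 + u3) by rewrite w2 h1 h3.
have [q' [s' [q'n s'sz s'l s'w]]] := IH _ _ _ c1 c2 c3.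
exists q', s'; split=> //; first by rewrite s'l l3.
by apply: mple_trans s'w; rewrite /= lerD2l; lra.
Qed.

Lemma M_ge q i j : mple (mxpow (mxpow (mxsubl X l) (crit_cyclicity X)) q i j) (csrM X l i j).
Proof.
case E: (mxpow _ q i j) => [v|] //.
have [s [hs hl' hw]] := ppow_up E.
have [q' [s' [q'n s'sz s'l s'w]]] := short_walk hs hw.
apply: (mple_trans s'w); rewrite -hl' -s'l.
apply: (mple_trans (ppow_low (mxsubl X l) i s'sz)).
exact: (big_ge (fun k : 'I_n => mxpow (mxpow (mxsubl X l) (crit_cyclicity X)) k i (last i s')) (mem_index_enum (Ordinal q'n)) isT).
Qed.
Lemma path_zip (e : rel 'I_n) x s : path e x s = all (fun p => e p.1 p.2) (zip (x :: s) s).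
Proof. by elim: s x => [|y s IH] x //=; rewrite IH. Qed.

Lemma cycle_connect (e : rel 'I_n) c x y : all (fun p => e p.1 p.2) (arcs c) ->
  x \in c -> y \in c -> connect e x y.
Proof.
move=> ha xc yc; have [z [pz lz sz az]] := rot_closed xc.
have pth : path e x z by rewrite path_zip (perm_all _ az).
have yz : y \in z by rewrite (perm_mem pz).
apply/connectP; exists (take (index y z).+1 z); first exact: take_path.
by rewrite last_take ?index_mem // nth_index.
Qed.

Lemma crit_witness k : crit_node X k -> exists c : seq 'I_n,
  [/\ is_cycle (arcA X) c, weight X c = (size c)%:R * l, k \in c,
      (forall y, y \in c -> crit_node X y) & (forall p, p \in arcs c -> crit_arc X p.1 p.2)].
Proof.
case/existsP => kk /existsP [t /andP [/andP [cy /eqP]]]; rewrite hl => -[el] kt.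
exists t; split=> //.
- have /and3P [sz _ _] := cy.
  by rewrite el /cmean mulrC divfK // pnatr_eq0 -lt0n.
- by move=> y yt; apply/existsP; exists kk; apply/existsP; exists t; rewrite /crit_cycle cy hl el eqxx.
- by move=> p pa; apply/existsP; exists kk; apply/existsP; exists t; rewrite /crit_cycle cy hl el eqxx -surjective_pairing.
Qed.

Lemma crit_closed_walk k : crit_node X k -> exists z : seq 'I_n,
  [/\ last k z = k, (0 < size z)%N, wt X k z = Some ((size z)%:R * l),
      wt (csrS X) k z = wt X k z & (forall y, y \in k :: z -> crit_node X y)].
Proof.
move=> ck; have [c [cy wc kc ncr acr]] := crit_witness ck.
have [z [pz lz sz az]] := rot_closed kc.
have /and3P [szc _ allc] := cy.
exists z; split=> //.
- by rewrite sz.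
- by rewrite wt_zip (perm_all _ az) allc (perm_big _ az) sz -wc.
- apply: wt_eq => p pin; rewrite /csrS.
  by rewrite (acr p) // -(perm_mem az).
- move=> y; rewrite in_cons => /orP [/eqP -> //|]; rewrite (perm_mem pz); exact: ncr.
Qed.

Lemma gcd_big_gt0 (I : eqType) (r : seq I) (P : pred I) (F : I -> nat) i0 :
  i0 \in r -> P i0 -> (0 < F i0)%N -> (0 < \big[gcdn/0%N]_(i <- r | P i) F i)%N.
Proof.
elim: r => [|a r IH] //; rewrite in_cons big_cons => /orP [/eqP <-|ir] Pi Fi.
  by rewrite Pi gcdn_gt0 Fi.
by case: (P a); rewrite ?gcdn_gt0 IH ?orbT.
Qed.

Lemma g_pos : (0 < crit_cyclicity X)%N.
Proof.
rewrite /crit_cyclicity; elim/big_ind: _ => //.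
  by move=> a b ha hb; rewrite lcmn_gt0 ha hb.
move=> i ci; have [c [cy wc ic ncr acr]] := crit_witness ci.
have /and3P [szc uc _] := cy.
have szn := size_uniq_le uc.
have kn : ((size c).-1 < n)%N by rewrite prednK.
pose k : 'I_n := Ordinal kn.
have ct : size c == k.+1 by rewrite /= prednK.
pose t : (k.+1).-tuple 'I_n := Tuple ct.
have ha : all (fun p => crit_arc X p.1 p.2) (arcs c) by apply/allP => p /acr.
rewrite /scc_gcd.
apply: (gcd_big_gt0 (mem_index_enum k)) => //.
apply: (gcd_big_gt0 (i0 := t) (mem_index_enum t)) => //.
rewrite /is_cycle /= szc uc ha /=.
apply/allP => y yc; rewrite /scc !(cycle_connect ha) //.
Qed.
Lemma S_sub i j : csrS X i j = None \/ csrS X i j = X i j.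
Proof. rewrite /csrS; case: (crit_arc X i j); by [right|left]. Qed.

Lemma M_up i k c1 : csrM X l i k = Some c1 -> exists s, [/\ (crit_cyclicity X %| size s)%N,
   last i s = k & wt X i s = Some (c1 + (size s)%:R * l)].
Proof.
rewrite /csrM => /big_ex [q [_ _ /ppow_up [s [hs hl' hw]]]].
by exists s; split => //; [rewrite hs dvdn_mulr | exact: wt_normS].
Qed.

Lemma up_CStR t i j v : CStR X t i j = Some v ->
  exists s k, [/\ last i s = j, k \in i :: s, crit_node X k,
     (size s %% crit_cyclicity X = t %% crit_cyclicity X)%N
   & wt X i s = Some (v + (size s)%:R * l - t%:R * l)].
Proof.
rewrite /CStR hl => /mxmul_ex [m [a [b [/mxmul_ex [k [c1 [c2 [hC hS ->]]]] hR ->]]]].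
move: hC; rewrite /csrC; case ck: (crit_node X k) => // /M_up [s1 [d1 l1 w1]].
move: hR; rewrite /csrR; case: (crit_node X m) => // /M_up [s3 [d3 l3 w3]].
have [r [sr lr wr]] := pow_up hS.
have wr' := wt_sub S_sub wr.
exists (s1 ++ r ++ s3), k; split=> //.
- by rewrite !last_cat l1 lr l3.
- by rewrite -l1 -cat_cons mem_cat mem_last.
- rewrite !size_cat; move: d1 d3 => /dvdnP [q1 ->] /dvdnP [q3 ->].
  by rewrite sr modnMDl addnC modnMDl.
- rewrite !wt_cat w1 l1 wr' lr w3 /=; congr Some.
  rewrite !size_cat !natrD sr; lra.
Qed.
Lemma split_at i s k : k \in i :: s -> exists s1 s2, s = s1 ++ s2 /\ last i s1 = k.
Proof.
rewrite in_cons => /orP [/eqP ->|ks]; first by exists [::], s.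
exists (take (index k s).+1 s), (drop (index k s).+1 s); split; first by rewrite cat_take_drop.
by rewrite last_take ?index_mem // nth_index.
Qed.

Lemma rep_walk M k z K a : last k z = k -> wt M k z = Some a ->
  [/\ last k (flatten (nseq K z)) = k, wt M k (flatten (nseq K z)) = Some (K%:R * a),
      size (flatten (nseq K z)) = (K * size z)%N & {subset flatten (nseq K z) <= z}].
Proof.
move=> lz wz; elim: K => [|K [l1 w1 s1 sub1]] /=; first by rewrite mul0r.
split.
- by rewrite last_cat lz l1.
- by rewrite wt_cat lz w1 wz /= -addn1 natrD; congr Some; lra.
- by rewrite size_cat s1 mulSn.
- by move=> y; rewrite mem_cat => /orP [//|/sub1].
Qed.

Lemma low_CStR t i s k w : wt X i s = Some w -> k \in i :: s -> crit_node X k ->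
  (size s %% crit_cyclicity X = t %% crit_cyclicity X)%N ->
  mple (Some (w - (size s)%:R * l + t%:R * l)) (CStR X t i (last i s)).
Proof.
set g := crit_cyclicity X => hw ks ck hmod.
have gp : (0 < g)%N := g_pos.
have [s1 [s2 [es ls1]]] := split_at ks; subst s.
move: hw; rewrite wt_cat ls1 => /mpmul_Some [w1 [w2 [hw1 hw2 ->]]].
have [z [lz zp wz wSz ncz]] := crit_closed_walk ck.
rewrite wz in wSz.
set p := (g - size s1 %% g)%N.
set K := (g * (p + t))%N.
have [lY wY sY subY] := rep_walk K lz wSz.
set Y := flatten (nseq K z) in lY wY sY subY.
have sYge : (p + t <= size Y)%N.
  rewrite sY (leq_trans _ (leq_pmulr _ zp)) // /K leq_pmull //.
set P := take p Y; set Rr := take t (drop p Y); set Q := drop t (drop p Y).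
have eY : Y = P ++ Rr ++ Q by rewrite /P /Rr /Q !cat_take_drop.
set k' := last k P; set m' := last k' Rr.
have lQ : last m' Q = k by rewrite -lY eY !last_cat.
move: wY; rewrite eY !wt_cat -/k' -/m' => /mpmul_Some [aP [v [hP /mpmul_Some [aR [aQ [hR hQ ->]]] eK]]].
have inY y : y \in Y -> crit_node X y by move=> /subY yz; apply: ncz; rewrite in_cons yz orbT.
have ck' : crit_node X k'.
  have : k' \in k :: P := mem_last k P; rewrite in_cons => /orP [/eqP -> //|/mem_take]; exact: inY.
have cm' : crit_node X m'.
  have : m' \in k' :: Rr := mem_last k' Rr; rewrite in_cons => /orP [/eqP -> //|/mem_take/mem_drop]; exact: inY.
have hP' := wt_sub S_sub hP; have hQ' := wt_sub S_sub hQ.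
have sU : (g %| size (s1 ++ P))%N.
  rewrite size_cat /P size_takel ?(leq_trans _ sYge) ?leq_addr // /p.
  rewrite {1}(divn_eq (size s1) g) -addnA subnKC ?(ltnW (ltn_pmod _ gp)) //.
  by rewrite dvdn_add // dvdn_mull.
have sQ : size Q = (size Y - p - t)%N by rewrite /Q !size_drop.
have sRr : size Rr = t by rewrite /Rr size_takel // size_drop leq_subRL ?(leq_trans (leq_addr t p)) // addnC.
have sV : (g %| size (Q ++ s2))%N.
  have E : (size (Q ++ s2) + (size (s1 ++ P)) + t %/ g * g = K * size z + (size s1 + size s2) %/ g * g)%N.
    have d1 := divn_eq t g; have d2 := divn_eq (size s1 + size s2) g.
    have sP : size P = p by rewrite /P size_takel // (leq_trans (leq_addr t p)).
    move: sQ sY sYge d1 d2 hmod; rewrite !size_cat sP; lia.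
  have : (g %| size (Q ++ s2) + (size (s1 ++ P)) + t %/ g * g)%N.
    rewrite E dvdn_add //; last exact: dvdn_mull.
    by rewrite /K; apply: dvdn_mulr; apply: dvdn_mulr.
  by rewrite (dvdn_addl _ (dvdn_mull _ (dvdnn g))) (dvdn_addl _ sU).
have hU : mple (Some (w1 + aP - (size (s1 ++ P))%:R * l)) (csrC X l i k').
  rewrite /csrC ck'; apply: mple_trans (M_ge (size (s1 ++ P) %/ g) i k').
  have -> : k' = last i (s1 ++ P) by rewrite last_cat ls1.
  have e : size (s1 ++ P) = (g * (size (s1 ++ P) %/ g))%N by rewrite mulnC divnK.
  apply: mple_trans (ppow_low _ _ e); rewrite (wt_normS' l (w := w1 + aP)); first by rewrite /= lexx.
  by rewrite wt_cat ls1 hw1 hP'.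
have hV : mple (Some (aQ + w2 - (size (Q ++ s2))%:R * l)) (csrR X l m' (last k s2)).
  rewrite /csrR cm'; apply: mple_trans (M_ge (size (Q ++ s2) %/ g) m' _).
  have -> : last k s2 = last m' (Q ++ s2) by rewrite last_cat lQ.
  have e : size (Q ++ s2) = (g * (size (Q ++ s2) %/ g))%N by rewrite mulnC divnK.
  apply: mple_trans (ppow_low _ _ e); rewrite (wt_normS' l (w := aQ + w2)); first by rewrite /= lexx.
  by rewrite wt_cat lQ hQ' hw2.
have hS : mple (Some aR) (mxpow (csrS X) t k' m').
  by rewrite -hR; apply: pow_low.
rewrite last_cat ls1 /CStR hl.
apply: mple_trans (mxmul_ge _ _ _ m' _).
apply: mple_trans (mpmul_mono (mxmul_ge _ _ _ k' _) (mple_refl _)).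
apply: mple_trans (mpmul_mono (mpmul_mono hU hS) hV).
rewrite /= .
have E2 : ((size (s1 ++ P))%:R + (size (Q ++ s2))%:R + t%:R) * l
        = ((size (s1 ++ s2))%:R + K%:R * (size z)%:R) * l.
  have En : (size (s1 ++ P) + size (Q ++ s2) + t = size (s1 ++ s2) + K * size z)%N.
    move: (sQ) (sY) (sYge) (sRr); rewrite !size_cat /P size_takel; last exact: leq_trans (leq_addr t p) sYge.
    clearbody p K; lia.
  by rewrite -natrM -!natrD En.
move: E2 eK; rewrite !mulrDl -mulrA; lra.
Qed.
End Loop.

Section Main.
Variables (R : realFieldType) (n : nat) (A1 A2 : mpmx R n) (l : R).
Hypothesis hA2 : mxlt A2 (CSR A1).
Hypothesis hl1 : mplambda A1 = Some l.
Local Notation A := (mxadd A1 A2).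
Local Notation g := (crit_cyclicity A1).

Lemma A1_le i j : mple (A1 i j) (A i j).
Proof. exact: mpadd_l. Qed.

Lemma arc_cases i j a : A i j = Some a -> A1 i j != Some a -> A2 i j = Some a.
Proof.
rewrite /mxadd; case: (A1 i j) => [x|]; case: (A2 i j) => [y|] //=.
- rewrite /Num.max; case: ifP => _ [->] //; by rewrite eqxx.
- by move=> [->]; rewrite eqxx.
Qed.

Lemma A2_lt i j a : A2 i j = Some a -> exists d, CSR A1 i j = Some d /\ a < d.
Proof.
move=> e; have [h1 h2] := hA2 i j; rewrite e in h1 h2.
case E: (CSR A1 i j) h1 h2 => [d|] //= ad h2; exists d; split=> //.
by rewrite lt_neqAle ad andbT; apply/eqP => ed; move: (h2 (congr1 Some ed)).
Qed.

Definition pure i s := all (fun p => A1 p.1 p.2 == A p.1 p.2) (zip (i :: s) s).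

Lemma transfer s i x : wt A i s = Some x -> exists s' x',
  [/\ last i s' = last i s, wt A1 i s' = Some x', (size s' %% g = size s %% g)%N,
      x - (size s)%:R * l <= x' - (size s')%:R * l
    & (pure i s /\ s' = s /\ x' = x) \/
      (x - (size s)%:R * l < x' - (size s')%:R * l /\ exists k, k \in i :: s' /\ crit_node A1 k)].
Proof.
elim: s i x => [|j s0 IH] i x /=.
  by move=> [<-]; exists [::], 0; split=> //; left.
move=> /mpmul_Some [a [x0 [ha hx0 ->]]].
have [s0' [x0' [l0 w0 m0 le0 d0]]] := IH _ _ hx0.
case E: (A1 i j == Some a).
  exists (j :: s0'), (a + x0'); split=> //=.
  - by rewrite (eqP E) w0.
  - by rewrite -addn1 -modnDml m0 modnDml addn1.
  - by move: le0; rewrite !mulrSr; lra.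
  case: d0 => [[p0 [-> ->]]|[lt0 [k [kin ck]]]].
    by left; rewrite /pure /= ha E.
  right; split; first by move: lt0; rewrite !mulrSr; lra.
  by exists k; split=> //; move: kin; rewrite !in_cons => /orP [->|->]; rewrite ?orbT.
have h2 := arc_cases ha (negbT E).
have [d [hd ad]] := A2_lt h2.
move: hd; rewrite /CSR => /(up_CStR hl1) [u [k [lu ku ck mu wu]]].
exists (u ++ s0'), (d + (size u)%:R * l - 1%:R * l + x0'); split.
- by rewrite last_cat lu.
- by rewrite wt_cat wu lu w0.
- by rewrite size_cat -modnDml mu modnDml add1n -addn1 -modnDml m0 modnDml addn1.
- by move: le0 ad; rewrite size_cat natrD /= !mulrSr ?mulr0n; lra.
right; split; first by move: le0 ad; rewrite size_cat natrD /= !mulrSr ?mulr0n; lra.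
by exists k; split=> //; move: ku; rewrite -cat_cons mem_cat => ->.
Qed.

Lemma cyc_wt (M : mpmx R n) c x0 : is_cycle (arcA M) c -> wt M (last x0 c) c = Some (weight M c).
Proof.
case/and3P; case: c => [|y c] // _ _ ha.
have lc : last (last x0 (y :: c)) (y :: c) = last x0 (y :: c) by [].
have P := closed_arcs lc isT.
by rewrite wt_zip (perm_all _ P) (perm_big _ P) ha.
Qed.

Lemma cycA_le c : is_cycle (arcA A) c -> weight A c <= (size c)%:R * l /\
  (weight A c = (size c)%:R * l -> forall p, p \in arcs c -> A1 p.1 p.2 = A p.1 p.2).
Proof.
move=> cy; have /and3P [sz _ _] := cy.
case: c sz cy => [|y c] // _ cy; set x := last y (y :: c).
have lc : last x (y :: c) = x by [].
have P := closed_arcs lc isT.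
have hw : wt A x (y :: c) = Some (weight A (y :: c)) by apply: cyc_wt.
have [s' [x' [l' w' _ le' d']]] := transfer hw.
have cl := closed_le hl1 (etrans l' lc) w'.
split; first by move: le' cl; lra.
move=> e; case: d' => [[pu _]|[lt' _]]; last by move: lt' cl; rewrite e; lra.
move=> p; rewrite -(perm_mem P) => pin.
by apply/eqP; move/allP: pu => /(_ p pin).
Qed.

Lemma arcA_mono i j : arcA A1 i j -> arcA A i j.
Proof. by rewrite /arcA /mxadd; case: (A1 i j) => //= a; case: (A2 i j). Qed.

Lemma isc_mono c : is_cycle (arcA A1) c -> is_cycle (arcA A) c.
Proof.
case/and3P => sz u ha; rewrite /is_cycle sz u /=.
by apply/allP => p /(allP ha); apply: arcA_mono.
Qed.

Lemma weight_mono c : is_cycle (arcA A1) c -> weight A1 c <= weight A c.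
Proof.
case: c => [|y c] cy; first by case/and3P: cy.
have := @wt_mono _ _ A1 A (last y (y :: c)) (y :: c) A1_le.
by rewrite !cyc_wt //; apply: isc_mono.
Qed.

Lemma lamA : mplambda A = Some l.
Proof.
apply: mple_anti.
  apply: big_le => k _ _; apply: big_le => t _ cy /=.
  have [h _] := cycA_le cy; have /and3P [sz _ _] := cy.
  by rewrite /cmean ler_pdivrMr ?ltr0n // mulrC.
have := hl1; rewrite /mplambda => /big_ex [k [_ _ /big_ex [t [_ cy /= [el]]]]].
change (mple (Some l) (mplambda A)).
apply: (mple_trans _ (big_ge (fun k : 'I_n => \big[@mpadd R/None]_(t : (k.+1).-tuple 'I_n | is_cycle (arcA A) t) Some (cmean A t)) (mem_index_enum k) isT)).
apply: (mple_trans _ (big_ge (fun t : (k.+1).-tuple 'I_n => Some (cmean A t)) (mem_index_enum t) (isc_mono cy))).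
rewrite /= -el /cmean ler_pM2r ?invr_gt0 ?ltr0n ?size_tuple //.
exact: weight_mono.
Qed.

Lemma cmean_eq (X : mpmx R n) c : (0 < size c)%N ->
  (l == cmean X c) = (weight X c == (size c)%:R * l).
Proof.
move=> sz; rewrite /cmean; apply/eqP/eqP => [->|->]; last by rewrite mulrAC divff ?mul1r // pnatr_eq0 -lt0n.
by rewrite mulrC divfK // pnatr_eq0 -lt0n.
Qed.

Lemma critcyc c : crit_cycle A c = crit_cycle A1 c.
Proof.
rewrite /crit_cycle lamA hl1.
apply/andP/andP => [[cy /eqP [e]]|[cy /eqP [e]]].
- have /and3P [sz u ha] := cy.
  have [_ pu] := cycA_le cy.
  have ew : weight A c = (size c)%:R * l by apply/eqP; rewrite -cmean_eq // e.
  have {}pu := pu ew.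
  have cy1 : is_cycle (arcA A1) c.
    rewrite /is_cycle sz u /=; apply/allP => p pin.
    by rewrite /arcA pu //; exact: (allP ha).
  have eW : weight A1 c = weight A c by apply: eq_big_seq => p pin; rewrite pu.
  by split=> //; apply/eqP; congr Some; apply/eqP; rewrite cmean_eq // eW ew.
- have /and3P [sz u ha] := cy.
  have cyA := isc_mono cy.
  have [le1 _] := cycA_le cyA.
  have ew1 : weight A1 c = (size c)%:R * l by apply/eqP; rewrite -cmean_eq // e.
  have ge1 := weight_mono cy.
  split=> //; apply/eqP; congr Some; apply/eqP; rewrite cmean_eq //.
  by apply/eqP; apply/eqP; rewrite eq_le le1 -ew1 ge1.
Qed.

Lemma nodeE i : crit_node A i = crit_node A1 i.
Proof. by apply: eq_existsb => k; apply: eq_existsb => t; rewrite critcyc. Qed.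

Lemma arcE i j : crit_arc A i j = crit_arc A1 i j.
Proof. by apply: eq_existsb => k; apply: eq_existsb => t; rewrite critcyc. Qed.

Lemma nodeF : crit_node A = crit_node A1.
Proof. by apply: functional_extensionality => i; rewrite nodeE. Qed.

Lemma arcF : crit_arc A = crit_arc A1.
Proof. by do 2 (apply: functional_extensionality => ?); rewrite arcE. Qed.

Lemma gE : crit_cyclicity A = crit_cyclicity A1.
Proof. by rewrite /crit_cyclicity nodeF arcF. Qed.

Lemma CStR_eq t i j : CStR A t i j = CStR A1 t i j.
Proof.
apply: mple_anti.
- case E: (CStR A t i j) => [v|] //.
  have [s [k [ls ks ck ms ws]]] := up_CStR lamA E.
  have [s' [x' [l' w' m' le' d']]] := transfer ws.
  have [k1 [k1in ck1]] : exists k1, k1 \in i :: s' /\ crit_node A1 k1.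
    by case: d' => [[_ [-> _]]|[_ h]] //; exists k; rewrite -nodeE.
  have ms' : (size s' %% g = t %% g)%N by rewrite m' -gE.
  have := low_CStR hl1 w' k1in ck1 ms'; rewrite l' ls.
  apply: mple_trans; rewrite /=; move: le'; lra.
- case E: (CStR A1 t i j) => [v|] //.
  have [s [k [ls ks ck ms ws]]] := up_CStR hl1 E.
  have := @wt_mono _ _ A1 A i s A1_le; rewrite ws.
  case ws': (wt A i s) => [w'|] // le.
  have ck' : crit_node A k by rewrite nodeE.
  have ms' : (size s %% crit_cyclicity A = t %% crit_cyclicity A)%N by rewrite gE.
  have := low_CStR lamA ws' ks ck' ms'; rewrite ls => h.
  apply: (mple_trans _ h); rewrite /=; move: le => /= le; lra.
Qed.

Lemma strict_bound t i s x : size s = t -> wt A i s = Some x ->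
  mple (Some x) (wt A1 i s) /\ pure i s \/ exists2 v, CStR A1 t i (last i s) = Some v & x < v.
Proof.
move=> st ws; have [s' [x' [l' w' m' le' d']]] := transfer ws.
case: d' => [[pu [es ex]]|[lt' [k [kin ck]]]].
  by left; split=> //; rewrite -es w' ex /= lexx.
right; have ms' : (size s' %% g = t %% g)%N by rewrite m' st.
have := low_CStR hl1 w' kin ck ms'; rewrite l'.
case: (CStR A1 t i (last i s)) => [v|] //= hv; exists v => //.
by move: lt' hv; rewrite st; lra.
Qed.

Lemma Ha t i j x : mxpow A t i j = Some x ->
  mple (Some x) (mxpow A1 t i j) \/ exists2 v, CStR A1 t i j = Some v & x < v.
Proof.
move=> /pow_up [s [st ls ws]]; rewrite -ls.
case: (strict_bound st ws) => [[h _]|]; last by right.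
by left; apply: mple_trans h (pow_low _ _ st).
Qed.

Lemma BN_sub (X : mpmx R n) i j : BN X i j = None \/ BN X i j = X i j.
Proof. rewrite /BN; case: ifP; by [left|right]. Qed.

Lemma Hb t i j x : mxpow (BN A) t i j = Some x ->
  mple (Some x) (mxpow (BN A1) t i j) \/ exists2 v, CStR A1 t i j = Some v & x < v.
Proof.
move=> /pow_up [s [st ls ws]]; rewrite -ls.
have ws' := wt_sub (BN_sub _) ws.
case: (strict_bound st ws') => [[_ pu]|]; last by right.
left; apply: mple_trans (pow_low _ _ st).
rewrite -ws; rewrite (wt_eq (M2 := BN A)) ?mple_refl // => p pin.
by rewrite /BN !nodeE (eqP (allP pu p pin)).
Qed.

Lemma BN_le (X : mpmx R n) i j : mple (BN X i j) (X i j).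
Proof. by rewrite /BN; case: ifP => _ //; apply: mple_refl. Qed.

Lemma BN_mono i j : mple (BN A1 i j) (BN A i j).
Proof. by rewrite /BN !nodeE; case: ifP => _ //; apply: A1_le. Qed.

Lemma step t i j : (mxpow A t i j = mpadd (CStR A t i j) (mxpow (BN A) t i j)) <->
  (mxpow A1 t i j = mpadd (CStR A1 t i j) (mxpow (BN A1) t i j)).
Proof.
rewrite CStR_eq; apply: mpE.
- exact: pow_mono A1_le.
- exact: pow_mono BN_mono.
- exact: pow_mono (BN_le A1).
- exact: pow_mono (BN_le A).
- exact: Ha.
- exact: Hb.
Qed.

End Main.

Unset Implicit Arguments.

Theorem lemmal (R : realFieldType) (n : nat) (A1 A2 : mpmx R n) :
  mxlt A2 (CSR A1) ->
  let A := mxadd A1 A2 in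
  [/\ mplambda A = mplambda A1,
      (forall i, crit_node A i = crit_node A1 i)
        /\ (forall i j, crit_arc A i j = crit_arc A1 i j),
      (forall t, (1 <= t)%N -> forall i j, CStR A t i j = CStR A1 t i j)
    & (forall T, is_T1 A T <-> is_T1 A1 T)].
Proof.
move=> hA2 A; rewrite /A.
case E: (mplambda A1) => [l|].
- have csr T : csr_from (mxadd A1 A2) T <-> csr_from A1 T.
    by split=> h t tT i j; apply/(step hA2 E); exact: h.
  split.
  + by rewrite (lamA hA2 E).
  + by split; [exact: nodeE hA2 E | exact: arcE hA2 E].
  + by move=> t _ i j; exact: (CStR_eq hA2 E t i j).
  + move=> T; rewrite /is_T1; split => [[h1 h2]|[h1 h2]]; split.
    * by apply/csr.
    * by move=> T' /csr /h2.
    * by apply/csr.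
    * by move=> T' /csr /h2.
- have eA : mxadd A1 A2 = A1.
    have bot i j : A2 i j = None.
      have [h _] := hA2 i j; move: h; rewrite /CSR /CStR E /mxbot; by case: (A2 i j).
    by do 2 (apply: functional_extensionality => ?); rewrite /mxadd bot; case: (A1 _ _).
  by rewrite eA; split.
Qed.
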